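(* Let $k\geq 2$ be an integer and let $A=[\bm{a}_1,\dots,\bm{a}_n]\in\mathbb{R}^{m\times n}$ have columns with $\|\bm{a}_i\|_2=1$ for all $i$. Suppose the mutual coherence $\mu=\max_{1\leq i<j\leq n}|\langle \bm{a}_i,\bm{a}_j\rangle|$ satisfies $\mu<\frac{1}{2k-1}$. Let $\lambda>0$, let $\bm{x}\in\mathbb{R}^n$ be arbitrary, let $\bm{z}\in\mathbb{R}^m$ with $\|\bm{z}\|_2\leq\lambda$, and set $\bm{b}=A\bm{x}+\bm{z}$. Let $\bm{x}^{\sharp}$ be an optimal solution of $$\min_{\bm{y}\in\mathbb{R}^n}\ \|\bm{y}\|_1+\frac{1}{2\lambda}\|\bm{b}-A\bm{y}\|_2^2 .$$ Define $$\alpha_1=\frac{\sqrt{1+(k-1)\mu}}{1-(k-1)\mu},\qquad \alpha_2=\frac{\sqrt{k}\,\mu}{1-(k-1)\mu},$$ $$f_k(t)=kt^2+3\sqrt{k}\,t+3,\qquad g_k(t)=2kt^2+4\sqrt{k}\,t+1,$$ and $$\widehat{C}_1=\frac{2}{\sqrt{k}\alpha_1+1},\quad \widehat{C}_2=2(\sqrt{k}\alpha_1+1),\quad \widehat{C}_3=\frac{2\sqrt{k}\alpha_1 f_k(\alpha_2)+2g_k(\alpha_2)}{\sqrt{k}(1-\sqrt{k}\alpha_2)(\sqrt{k}\alpha_1+1)},$$ $$\widehat{C}_4=\frac{\big(\sqrt{k}\alpha_1(5+2\sqrt{k}\alpha_2)+g_k(\alpha_2)\big)(\sqrt{k}\alpha_1+1)}{\sqrt{k}(1-\sqrt{k}\alpha_2)}.$$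 Then $$\|A(\bm{x}^{\sharp}-\bm{x})\|_2\leq \widehat{C}_1\|\bm{x}-\bm{x}_{[k]}\|_1+\widehat{C}_2\lambda,\qquad \|\bm{x}^{\sharp}-\bm{x}\|_2\leq \widehat{C}_3\|\bm{x}-\bm{x}_{[k]}\|_1+\widehat{C}_4\lambda.$$
   Context: For $\bm{x}\in\mathbb{R}^n$, $\bm{x}_{[k]}$ denotes a best $k$-term approximation of $\bm{x}$, i.e. $\bm{x}_{[k]}\in\arg\min_{\|\bm{y}\|_0\leq k}\|\bm{y}-\bm{x}\|_2$, where $\|\bm{y}\|_0$ is the number of nonzero entries of $\bm{y}$. *)

(* Defs.v *)
From HB Require Import structures.
From mathcomp Require Import all_boot all_order all_algebra.
From mathcomp Require Import reals.
Set Implicit Arguments. Unset Strict Implicit. Unset Printing Implicit Defensive.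
Import Order.TTheory GRing.Theory Num.Theory.
Local Open Scope ring_scope.

Section Defs.
Variable R : realType.

Definition norm2 {n : nat} (v : 'cV[R]_n) : R := Num.sqrt (\sum_(i < n) v i 0 ^+ 2).
Definition norm1 {n : nat} (v : 'cV[R]_n) : R := \sum_(i < n) `|v i 0|.
Definition norm0 {n : nat} (v : 'cV[R]_n) : nat := #|[set i : 'I_n | v i 0 != 0]|.

Definition best_kterm {n : nat} (k : nat) (x xk : 'cV[R]_n) : Prop :=
  (norm0 xk <= k)%N /\
  forall y : 'cV[R]_n, (norm0 y <= k)%N -> norm2 (xk - x) <= norm2 (y - x).

Definition col_dot {m n : nat} (A : 'M[R]_(m, n)) (i j : 'I_n) : R :=
  \sum_(l < m) A l i * A l j.

(* mutual coherence: max over i < j of |<a_i, a_j>| (0 if n <= 1) *)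
Definition coherence {m n : nat} (A : 'M[R]_(m, n)) : R :=
  \big[Num.max/0]_(i < n) \big[Num.max/0]_(j < n | (i < j)%N) `|col_dot A i j|.

Definition lasso_obj {m n : nat} (A : 'M[R]_(m, n)) (b : 'cV[R]_m) (lam : R)
  (y : 'cV[R]_n) : R :=
  norm1 y + (2 * lam)^-1 * norm2 (b - A *m y) ^+ 2.

Definition fk (k : nat) (t : R) : R :=
  k%:R * t ^+ 2 + 3 * Num.sqrt k%:R * t + 3.
Definition gk (k : nat) (t : R) : R :=
  2 * k%:R * t ^+ 2 + 4 * Num.sqrt k%:R * t + 1.
End Defs.

(* Main.v *)
Require Import Defs.
From HB Require Import structures.
From mathcomp Require Import all_boot all_order all_algebra.
From mathcomp Require Import reals ring lra.
Import Order.TTheory GRing.Theory Num.Theory.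
Local Open Scope ring_scope.

Section Gen.
Variable R : realType.

Lemma sum_sq_expand (I : finType) (p q : I -> R) (a b : R) :
  \sum_i (a * q i - b * p i) ^+ 2 =
   a ^+ 2 * (\sum_i q i ^+ 2) - (2 * a * b) * (\sum_i p i * q i) + b ^+ 2 * (\sum_i p i ^+ 2).
Proof.
rewrite !mulr_sumr -sumrB -big_split /=.
by apply: eq_bigr => i _; ring.
Qed.

Lemma CS (I : finType) (p q : I -> R) :
  (\sum_i p i * q i) ^+ 2 <= (\sum_i p i ^+ 2) * (\sum_i q i ^+ 2).
Proof.
have H : 0 <= \sum_i ((\sum_i p i ^+ 2) * q i - (\sum_i p i * q i) * p i) ^+ 2
  by apply: sumr_ge0 => i _; exact: sqr_ge0.
rewrite sum_sq_expand in H.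
move: H.
have a0 : 0 <= \sum_i p i ^+ 2 by apply: sumr_ge0 => i _; exact: sqr_ge0.
have c0 : 0 <= \sum_i q i ^+ 2 by apply: sumr_ge0 => i _; exact: sqr_ge0.
move: a0 c0.
have [az|ap] := eqVneq (\sum_i p i ^+ 2) 0.
  have pz : forall i, p i = 0.
    move=> i; apply/eqP; rewrite -sqrf_eq0; apply/eqP.
    by apply: (psumr_eq0P (P := predT) (F := fun i => p i ^+ 2)) => // j _; exact: sqr_ge0.
  have -> : \sum_i p i * q i = 0 by rewrite big1 // => i _; rewrite pz mul0r.
  by rewrite expr0n /= => _ c0 _; rewrite mulr_ge0 // az.
move: ap.
set a := \sum_i p i ^+ 2; set b := \sum_i p i * q i; set c := \sum_i q i ^+ 2.
move=> ap a0 c0 H.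
have ap' : 0 < a by rewrite lt_def ap a0.
nra.
Qed.

Lemma le_of_sq (a b : R) : 0 <= b -> a ^+ 2 <= b ^+ 2 -> a <= b.
Proof. move=> b0 h; nra. Qed.

Lemma sqrt_add_le (a b : R) : 0 <= a -> 0 <= b ->
  Num.sqrt (a + b) <= Num.sqrt a + Num.sqrt b.
Proof.
move=> a0 b0.
have sa := sqrtr_ge0 a; have sb := sqrtr_ge0 b.
have ha := sqr_sqrtr a0; have hb := sqr_sqrtr b0.
apply: le_of_sq; first exact: addr_ge0.
rewrite sqr_sqrtr ?addr_ge0 //; nra.
Qed.

Lemma le_sqrt_prod (x a b : R) : 0 <= a -> 0 <= b -> x ^+ 2 <= a * b ->
  x <= Num.sqrt a * Num.sqrt b.
Proof.
move=> a0 b0 h.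
apply: le_trans (ler_norm x) _.
by rewrite -sqrtr_sqr -sqrtrM // ler_sqrt ?mulr_ge0.
Qed.




Section Mat.
Variables (m n : nat) (A : 'M[R]_(m, n)).

Definition Av (v : 'I_n -> R) (l : 'I_m) := \sum_j A l j * v j.
Definition Qf (v w : 'I_n -> R) := \sum_i \sum_j v i * w j * col_dot A i j.

Lemma ip_gram v w : \sum_l Av v l * Av w l = Qf v w.
Proof.
rewrite /Qf /Av /col_dot.
under eq_bigr do rewrite big_distrl /=.
under eq_bigr do under eq_bigr do rewrite big_distrr /=.
rewrite exchange_big; apply: eq_bigr => i _.
rewrite exchange_big; apply: eq_bigr => j _.
rewrite mulr_sumr; apply: eq_bigr => l _; ring.
Qed.

Lemma Av_add v w l : Av (fun i => v i + w i) l = Av v l + Av w l.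
Proof. by rewrite /Av -big_split; apply: eq_bigr => i _; rewrite mulrDr. Qed.

Lemma Qf_ge0 v : 0 <= Qf v v.
Proof. rewrite -ip_gram; apply: sumr_ge0 => l _; rewrite -expr2; exact: sqr_ge0. Qed.

Lemma sum_abs_supp (v : 'I_n -> R) (S : {set 'I_n}) :
  (forall i, i \notin S -> v i = 0) ->
  (\sum_i `|v i|) ^+ 2 <= #|S|%:R * \sum_i v i ^+ 2.
Proof.
move=> hv.
have := CS _ (fun i => (i \in S)%:R) (fun i => `|v i|).
have -> : \sum_i (i \in S)%:R * `|v i| = \sum_i `|v i|.
  apply: eq_bigr => i _; case: (boolP (i \in S)) => hi; first by rewrite mul1r.
  by rewrite hv // normr0 mulr0.
have -> : \sum_i ((i \in S)%:R : R) ^+ 2 = #|S|%:R.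
  rewrite (eq_bigr (fun i => if i \in S then 1 else 0)); last first.
    by move=> i _; case: (i \in S); rewrite ?expr1n ?expr0n.
  by rewrite -big_mkcond sumr_const.
have -> : \sum_i `|v i| ^+ 2 = \sum_i v i ^+ 2.
  by apply: eq_bigr => i _; rewrite real_normK ?num_real.
done.
Qed.


Lemma sum_delta (F : 'I_n -> 'I_n -> R) i :
  \sum_j F i j * (i == j)%:R = F i i.
Proof.
rewrite (bigD1 i) //= eqxx mulr1 big1 ?addr0 // => j hj.
by rewrite eq_sym (negbTE hj) mulr0.
Qed.

Lemma sq_sum_abs (v : 'I_n -> R) :
  (\sum_i `|v i|) ^+ 2 = \sum_i \sum_j `|v i| * `|v j|.
Proof.
rewrite expr2 big_distrl /=; apply: eq_bigr => i _.
by rewrite big_distrr.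
Qed.

Variable mu : R.
Hypothesis hdiag : forall i, col_dot A i i = 1.
Hypothesis hmu0 : 0 <= mu.
Hypothesis hoff : forall i j, i != j -> `|col_dot A i j| <= mu.

Lemma Qf_diag_bound v :
  `|Qf v v - \sum_i v i ^+ 2| <= mu * ((\sum_i `|v i|) ^+ 2 - \sum_i v i ^+ 2).
Proof.
have e1 : \sum_i v i ^+ 2 = \sum_i \sum_j v i * v j * (i == j)%:R.
  by apply: eq_bigr => i _; rewrite (sum_delta (fun i j => v i * v j)) expr2.
have e2 : \sum_i v i ^+ 2 = \sum_i \sum_j `|v i| * `|v j| * (i == j)%:R.
  apply: eq_bigr => i _; rewrite (sum_delta (fun i j => `|v i| * `|v j|)).
  by rewrite -normrM -expr2 ger0_norm ?sqr_ge0.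
rewrite {1}e1 /Qf -sumrB.
under eq_bigr do rewrite -sumrB.
rewrite e2 sq_sum_abs -sumrB mulr_sumr.
apply: le_trans (ler_norm_sum _ _ _) _.
apply: ler_sum => i _.
rewrite -sumrB mulr_sumr.
apply: le_trans (ler_norm_sum _ _ _) _.
apply: ler_sum => j _.
have [<-|hij] := eqVneq i j.
  rewrite hdiag; have -> : (true%:R : R) = 1 by [].
  by rewrite mulr1 subrr normr0 mulr1 subrr mulr0.
have -> : (false%:R : R) = 0 by [].
rewrite mulr0 !subr0 normrM mulrC normrM.
rewrite mulr0 subr0; apply: ler_wpM2r; [by rewrite mulr_ge0 | exact: hoff].
Qed.

Lemma Qf_cross_bound v w :
  (forall i, v i * w i = 0) ->
  `|Qf v w| <= mu * (\sum_i `|v i|) * (\sum_i `|w i|).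
Proof.
move=> hvw.
rewrite /Qf -mulrA big_distrl /= mulr_sumr.
apply: le_trans (ler_norm_sum _ _ _) _.
apply: ler_sum => i _.
rewrite big_distrr /= mulr_sumr.
apply: le_trans (ler_norm_sum _ _ _) _.
apply: ler_sum => j _.
have [<-|hij] := eqVneq i j.
  by rewrite hvw mul0r normr0 mulr_ge0 ?mulr_ge0.
rewrite normrM mulrC normrM.
apply: ler_wpM2r; [by rewrite mulr_ge0 | exact: hoff].
Qed.


Lemma nsp_alg (K P u sk V1 W1 q qvw sq K2 : R) :
  0 <= P -> 0 <= u -> 0 <= sk -> 0 <= K2 -> 0 <= V1 -> 0 <= W1 -> 0 < 1 - (K - 1) * mu ->
  - (mu * (V1 ^+ 2 - P ^+ 2)) <= q - P ^+ 2 ->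
  q - P ^+ 2 <= mu * (V1 ^+ 2 - P ^+ 2) ->
  mu * (V1 ^+ 2 - P ^+ 2) <= mu * (K * P ^+ 2 - P ^+ 2) ->
  q + qvw <= sq * u -> sq <= K2 * P ->
  - (mu * V1 * W1) <= qvw -> V1 <= sk * P ->
  (1 - (K - 1) * mu) * P <= K2 * u + sk * mu * W1.
Proof.
move=> P0 u0 sk0 K20 V10 W10 K1p hd1 hd2 hmuV hcs hsq hc hV1.
have e1 : (1 - (K - 1) * mu) * P ^+ 2 <= q by nra.
have e3 : sq * u <= K2 * P * u by apply: ler_wpM2r.
have e4 : mu * V1 * W1 <= mu * (sk * P) * W1.
  by apply: ler_wpM2r => //; apply: ler_wpM2l.
have hmain : (1 - (K - 1) * mu) * P ^+ 2 <= P * (K2 * u + sk * mu * W1).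
  have : (1 - (K - 1) * mu) * P ^+ 2 <= K2 * P * u + mu * (sk * P) * W1 by lra.
  by have -> : P * (K2 * u + sk * mu * W1) = K2 * P * u + mu * (sk * P) * W1 by ring.
have [Pz|Pnz] := eqVneq P 0.
  rewrite Pz mulr0; apply: addr_ge0; first exact: mulr_ge0.
  by rewrite mulr_ge0 ?mulr_ge0.
have Ppos : 0 < P by rewrite lt_def Pnz P0.
rewrite -(ler_pM2l Ppos).
by have -> : P * ((1 - (K - 1) * mu) * P) = (1 - (K - 1) * mu) * P ^+ 2 by ring.
Qed.

Lemma nsp (k : nat) (S : {set 'I_n}) (h v w : 'I_n -> R) :
  (#|S| <= k)%N -> (forall i, i \notin S -> v i = 0) -> (forall i, i \in S -> w i = 0) ->
  (forall i, v i + w i = h i) ->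
  0 < 1 - (k%:R - 1) * mu -> (1 <= k)%N ->
  (1 - (k%:R - 1) * mu) * Num.sqrt (\sum_i v i ^+ 2) <=
    Num.sqrt (1 + (k%:R - 1) * mu) * Num.sqrt (\sum_l Av h l ^+ 2)
    + Num.sqrt k%:R * mu * \sum_i `|w i|.
Proof.
move=> hS hv hw hvw K1pos k1.
have s0 : 0 <= \sum_i v i ^+ 2 by apply: sumr_ge0 => i _; exact: sqr_ge0.
have hV : (\sum_i `|v i|) ^+ 2 <= k%:R * \sum_i v i ^+ 2.
  apply: le_trans (sum_abs_supp v S hv) _.
  by apply: ler_wpM2r => //; rewrite ler_nat.
have hV1 : \sum_i `|v i| <= Num.sqrt k%:R * Num.sqrt (\sum_i v i ^+ 2).
  by apply: le_sqrt_prod.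
have hd := Qf_diag_bound v.
rewrite ler_norml in hd; case/andP: hd => hd1 hd2.
have Kge1 : 1 <= (k%:R : R) by rewrite ler1n.
have hmuV : mu * ((\sum_i `|v i|) ^+ 2 - \sum_i v i ^+ 2) <=
            mu * (k%:R * \sum_i v i ^+ 2 - \sum_i v i ^+ 2).
  by apply: ler_wpM2l => //; rewrite lerD2r.
have hvw0 : forall i, v i * w i = 0.
  move=> i; case: (boolP (i \in S)) => hi; first by rewrite hw // mulr0.
  by rewrite hv // mul0r.
have hc := Qf_cross_bound v w hvw0.
rewrite ler_norml in hc; case/andP: hc => hc1 hc2.
have hsplit : \sum_l Av v l * Av h l = Qf v v + Qf v w.
  rewrite -!ip_gram -big_split /=; apply: eq_bigr => l _.
  rewrite -mulrDr; congr (_ * _).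
  rewrite -Av_add /Av; apply: eq_bigr => i _; by rewrite hvw.
have hq0 := Qf_ge0 v.
have hcs : \sum_l Av v l * Av h l <= Num.sqrt (Qf v v) * Num.sqrt (\sum_l Av h l ^+ 2).
  apply: le_sqrt_prod => //; first by apply: sumr_ge0 => l _; exact: sqr_ge0.
  have := CS _ (Av v) (Av h).
  suff -> : \sum_l Av v l ^+ 2 = Qf v v by [].
  by rewrite -ip_gram; apply: eq_bigr => l _; rewrite expr2.
have hsq : Num.sqrt (Qf v v) <= Num.sqrt (1 + (k%:R - 1) * mu) * Num.sqrt (\sum_i v i ^+ 2).
  rewrite -sqrtrM; last by rewrite addr_ge0 // mulr_ge0 // subr_ge0.
  rewrite ler_sqrt; last by rewrite mulr_ge0 // addr_ge0 // mulr_ge0 // subr_ge0.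
  lra.
have hP2 : Num.sqrt (\sum_i v i ^+ 2) ^+ 2 = \sum_i v i ^+ 2 by rewrite sqr_sqrtr.
rewrite -hP2 in hd1 hd2 hmuV hV.
rewrite hsplit in hcs.
apply: (@nsp_alg _ _ _ _ _ _ _ _ _ _ _ _ _ _ _ _ _ hd1 hd2 hmuV hcs hsq hc1 hV1) => //.
- exact: sqrtr_ge0.
- exact: sqrtr_ge0.
- exact: sqrtr_ge0.
- exact: sqrtr_ge0.
- by apply: sumr_ge0 => i _; exact: normr_ge0.
- by apply: sumr_ge0 => i _; exact: normr_ge0.
Qed.

End Mat.
End Gen.
Section Arith.
Variable R : realType.

Lemma arith_u (b g l s u aT cT : R) :
  0 <= b -> 0 <= g -> g < 1 -> 0 < l -> 0 <= s -> 0 <= u -> 0 <= aT -> 0 <= cT ->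
  2 * l * (cT - aT - 2 * s) + u ^+ 2 <= 2 * l * u ->
  aT <= b * u + g * cT ->
  (b + 1) * u <= 2 * s + 2 * (b + 1) ^+ 2 * l.
Proof.
move=> b0 g0 g1 l0 s0 u0 a0 c0 F1 F2.
have h1 : l * aT <= l * (b * u + g * cT) by apply: ler_wpM2l => //; exact: ltW.
have h2 : l * (g * cT) <= l * cT.
  apply: ler_wpM2l; first exact: ltW.
  by rewrite -[X in _ <= X]mul1r; apply: ler_wpM2r => //; exact: ltW.
have hu2 : u ^+ 2 <= 2 * l * (b + 1) * u + 4 * l * s by nra.
have B0 : 0 < b + 1 by lra.
have e : ((b + 1) * u) * ((b + 1) * u - 2 * (b+1)^+2 * l) <= (b+1)^+2 * (4 * l * s).
  have -> : ((b + 1) * u) * ((b + 1) * u - 2 * (b+1)^+2 * l) = (b+1)^+2 * (u^+2 - 2 * l * (b+1) * u) by ring.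
  apply: ler_wpM2l; [exact: sqr_ge0 | lra].
move: e; move: ((b + 1) * u) => t e.
have Bl : 0 < (b+1)^+2 * l by apply: mulr_gt0 => //; exact: exprn_gt0.
rewrite leNgt; apply/negP => hlt.
have p0 : 0 < t * (t - 2 * (b+1)^+2 * l - 2 * s) by apply: mulr_gt0; lra.
have q0 : 0 <= (t - 2 * (b+1)^+2 * l) * s by apply: mulr_ge0; lra.
move: ((b+1)^+2) Bl e hlt p0 q0 => K Bl e hlt p0 q0.
nra.
Qed.

Lemma arith_H (b g l s u aT cT H sk : R) :
  0 <= b -> 0 <= g -> g < 1 -> 0 < l -> 0 <= s -> 0 <= u -> 0 <= aT -> 0 <= cT ->
  0 <= H -> 0 < sk ->
  2 * l * (cT - aT - 2 * s) + u ^+ 2 <= 2 * l * u ->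
  aT <= b * u + g * cT ->
  2 * sk * H <= 2 * b * u + (2 * g + 1) * (aT + cT) ->
  (1 - g) * (b + 1) * (2 * sk * H) <=
    2 * (2 * b * (g ^+ 2 + 3 * g + 3) + 2 * (2 * g ^+ 2 + 4 * g + 1)) * s
    + 2 * (b + 1) ^+ 2 * (b * (5 + 2 * g) + (2 * g ^+ 2 + 4 * g + 1)) * l.
Proof.
move=> b0 g0 g1 l0 s0 u0 a0 c0 H0 sk0 F1 F2 F3.
have hu := arith_u b g l s u aT cT b0 g0 g1 l0 s0 u0 a0 c0 F1 F2.
have hc : 2 * (1 - g) * cT <= 4 * s + l * (b + 1) ^+ 2.
  rewrite -(ler_pM2l l0).
  have h1 : l * aT <= l * (b * u + g * cT) by apply: ler_wpM2l => //; exact: ltW.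
  have h2 : 0 <= (u - l * (b + 1)) ^+ 2 by exact: sqr_ge0.
  nra.
have hH : 2 * sk * H <= b * (2 * g + 3) * u + (2 * g + 1) * (1 + g) * cT.
  have : (2 * g + 1) * aT <= (2 * g + 1) * (b * u + g * cT).
    by apply: ler_wpM2l => //; lra.
  lra.
have DB : 0 <= (1 - g) * (b + 1) by apply: mulr_ge0; lra.
have X1 := ler_wpM2l DB hH.
have X3 : 2 * b * (2 * g + 3) * (1 - g) * ((b + 1) * u) <=
          2 * b * (2 * g + 3) * (1 - g) * (2 * s + 2 * (b + 1) ^+ 2 * l).
  apply: ler_wpM2l => //; apply: mulr_ge0; last lra.
  by apply: mulr_ge0; [apply: mulr_ge0 | lra]; lra.
have X4 : (2 * g + 1) * (1 + g) * (b + 1) * (2 * (1 - g) * cT) <=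
          (2 * g + 1) * (1 + g) * (b + 1) * (4 * s + l * (b + 1) ^+ 2).
  apply: ler_wpM2l => //; apply: mulr_ge0; last lra.
  apply: mulr_ge0; lra.
have ds : 0 <= 4 * (b * (2 * g ^+ 2 + 4 * g + 2) + 2 * g ^+ 2 + 5 * g + 1) * s.
  apply: mulr_ge0 => //; apply: mulr_ge0; first lra.
  have : 0 <= g ^+ 2 by exact: sqr_ge0.
  have : 0 <= b * (2 * g ^+ 2 + 4 * g + 2) by apply: mulr_ge0 => //; nra.
  lra.
have dl : 0 <= (b + 1) ^+ 2 * (b * (6 * g ^+ 2 + 9 * g + 7) + (6 * g ^+ 2 + 13 * g + 3)) * l.
  apply: mulr_ge0; last exact: ltW.
  apply: mulr_ge0; first exact: sqr_ge0.
  have : 0 <= g ^+ 2 by exact: sqr_ge0.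
  have : 0 <= b * (6 * g ^+ 2 + 9 * g + 7) by apply: mulr_ge0 => //; nra.
  lra.
have X2 : 2 * ((1 - g) * (b + 1) * (b * (2 * g + 3) * u + (2 * g + 1) * (1 + g) * cT)) =
   2 * b * (2 * g + 3) * (1 - g) * ((b + 1) * u) + (2 * g + 1) * (1 + g) * (b + 1) * (2 * (1 - g) * cT).
  by ring.
have X5 : 2 * b * (2 * g + 3) * (1 - g) * (2 * s + 2 * (b + 1) ^+ 2 * l)
          + (2 * g + 1) * (1 + g) * (b + 1) * (4 * s + l * (b + 1) ^+ 2)
          + 4 * (b * (2 * g ^+ 2 + 4 * g + 2) + 2 * g ^+ 2 + 5 * g + 1) * s
          + (b + 1) ^+ 2 * (b * (6 * g ^+ 2 + 9 * g + 7) + (6 * g ^+ 2 + 13 * g + 3)) * l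
        = 2 * (2 * (2 * b * (g ^+ 2 + 3 * g + 3) + 2 * (2 * g ^+ 2 + 4 * g + 1)) * s
    + 2 * (b + 1) ^+ 2 * (b * (5 + 2 * g) + (2 * g ^+ 2 + 4 * g + 1)) * l).
  ring.
lra.
Qed.
End Arith.
Section C.
Variable R : realType.
Variables (m n : nat) (A : 'M[R]_(m, n)).

Lemma col_dotC (i j : 'I_n) : col_dot A i j = col_dot A j i.
Proof. by apply: eq_bigr => l _; rewrite mulrC. Qed.

Lemma coh_lt (i j : 'I_n) : (i < j)%N -> `|col_dot A i j| <= coherence A.
Proof.
move=> hij; rewrite /coherence.
apply: le_trans (le_bigmax _ _ i).
exact: (le_bigmax_cond _ (fun j => `|col_dot A i j|) hij).
Qed.

Lemma coh_off (i j : 'I_n) : i != j -> `|col_dot A i j| <= coherence A.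
Proof.
move=> hij; case: (ltngtP i j) => h.
- exact: coh_lt.
- by rewrite col_dotC; apply: coh_lt.
- by move: hij; rewrite (val_inj h) eqxx.
Qed.

Lemma coh_ge0 : 0 <= coherence A.
Proof.
rewrite /coherence; elim/big_ind: _ => //.
  by move=> x y hx hy; rewrite le_max hx.
move=> i _; elim/big_ind: _ => //.
  by move=> x y hx hy; rewrite le_max hx.
Qed.

Lemma diag1 (i : 'I_n) : norm2 (col i A) = 1 -> col_dot A i i = 1.
Proof.
rewrite /norm2 => H.
have s0 : 0 <= \sum_l (col i A) l 0 ^+ 2 by apply: sumr_ge0 => l _; exact: sqr_ge0.
have : \sum_l (col i A) l 0 ^+ 2 = 1 by rewrite -(sqr_sqrtr s0) H expr1n.
move <-; apply: eq_bigr => l _; by rewrite mxE expr2.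
Qed.


Lemma bk_eq (k : nat) (x xk : 'cV[R]_n) :
  best_kterm k x xk -> forall i, xk i 0 != 0 -> xk i 0 = x i 0.
Proof.
case=> hk hmin i hi.
pose y : 'cV[R]_n := \col_j (if j == i then x i 0 else xk j 0).
have hy : (norm0 y <= k)%N.
  apply: leq_trans hk; apply: subset_leq_card; apply/subsetP => j.
  rewrite !inE mxE; case: (j =P i) => [-> _|_ //]; exact: hi.
have := hmin y hy; rewrite /norm2 ler_sqrt; last first.
  by apply: sumr_ge0 => l _; exact: sqr_ge0.
rewrite (bigD1 i) //= [X in _ <= X](bigD1 i) //=.
have -> : \sum_(j < n | j != i) (y - x) j 0 ^+ 2 = \sum_(j < n | j != i) (xk - x) j 0 ^+ 2.
  by apply: eq_bigr => j hj; rewrite !mxE (negbTE hj).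
rewrite !mxE eqxx subrr expr0n /= add0r => h.
have h2 : (xk i 0 - x i 0) ^+ 2 <= 0 by lra.
apply/eqP; rewrite -subr_eq0 -sqrf_eq0; apply/eqP.
by apply/eqP; rewrite eq_le h2 sqr_ge0.
Qed.


Lemma sort_set (k : nat) (h : 'I_n -> R) : exists S : {set 'I_n},
  (#|S| <= k)%N /\ forall j, j \notin S -> k%:R * `|h j| <= \sum_(i in S) `|h i|.
Proof.
have P0 : set0 \in [pred S : {set 'I_n} | (#|S| <= k)%N] by rewrite inE cards0.
case: (@arg_maxP _ R _ set0 [pred S : {set 'I_n} | (#|S| <= k)%N] (fun S : {set 'I_n} => \sum_(i in S) `|h i|) P0) => S; rewrite inE => hS hmax.
exists S; split => // j hj.
have F0 : 0 <= \sum_(i in S) `|h i| by apply: sumr_ge0 => i _; exact: normr_ge0.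
case: (ltnP #|S| k) => hk.
  have h1 : \sum_(i in j |: S) `|h i| <= \sum_(i in S) `|h i|.
    by apply: hmax; rewrite inE cardsU1 hj.
  rewrite big_setU1 //= in h1.
  have hj0 : `|h j| <= 0 by lra.
  have -> : `|h j| = 0 by apply/eqP; rewrite eq_le hj0 normr_ge0.
  by rewrite mulr0.
have hSk : #|S| = k by apply/eqP; rewrite eqn_leq hS hk.
rewrite mulr_natl -hSk -sumr_const.
apply: ler_sum => i hi.
have hjS : j \notin S :\ i by rewrite !inE negb_and hj orbT.
have h1 : \sum_(i0 in j |: (S :\ i)) `|h i0| <= \sum_(i0 in S) `|h i0|.
  apply: hmax; rewrite inE cardsU1 hjS.
  by move: (cardsD1 i S); rewrite hi hSk => ->.
rewrite big_setU1 //= (big_setD1 i hi) /= in h1.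
lra.
Qed.
End C.
Arguments Av {R m n} A v l.
Lemma nsp_div (R : realType) (K1 K2 P u sk mu c : R) : 0 < K1 ->
  K1 * P <= K2 * u + sk * mu * c -> P <= K2 / K1 * u + sk * mu / K1 * c.
Proof.
move=> K1p h; rewrite -(ler_pM2l K1p).
have -> : K1 * (K2 / K1 * u + sk * mu / K1 * c) = K2 * u + sk * mu * c.
  by field; rewrite gt_eqF.
done.
Qed.

Lemma l1_l2 (R : realType) (n k : nat) (S : {set 'I_n}) (v : 'I_n -> R) :
  (#|S| <= k)%N -> (forall i, i \notin S -> v i = 0) ->
  \sum_i `|v i| <= Num.sqrt (k%:R) * Num.sqrt (\sum_i v i ^+ 2).
Proof.
move=> hS hv.
have s0 : 0 <= \sum_i v i ^+ 2 by apply: sumr_ge0 => i _; exact: sqr_ge0.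
apply: le_sqrt_prod => //.
apply: le_trans (sum_abs_supp _ _ v S hv) _.
by apply: ler_wpM2r => //; rewrite ler_nat.
Qed.

Lemma sum_sq_diff (R : realType) (p : nat) (a b : 'I_p -> R) :
  \sum_l (a l - b l) ^+ 2 = \sum_l a l ^+ 2 - 2 * \sum_l a l * b l + \sum_l b l ^+ 2.
Proof.
rewrite mulr_sumr -sumrB -big_split /=; apply: eq_bigr => l _; ring.
Qed.

Lemma lasso_alg (R : realType) (l N1 N0 Z ip U2 u : R) : 0 < l ->
  N1 + (2 * l)^-1 * (Z - 2 * ip + U2) <= N0 + (2 * l)^-1 * Z ->
  ip <= l * u -> u ^+ 2 = U2 -> 2 * l * (N1 - N0) + u ^+ 2 <= 2 * l * u.
Proof.
move=> l0 h hip hu.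
have l2 : 2 * l != 0 by rewrite mulf_neq0 // gt_eqF.
have e : forall t, 2 * l * ((2 * l)^-1 * t) = t by move=> t; rewrite mulrA mulfV ?mul1r.
have := ler_wpM2l (_ : 0 <= 2 * l) h; rewrite !mulrDr !e => /(_ ltac:(lra)) h2.
lra.
Qed.

Lemma tri (R : realType) (a b : R) : `|a| <= `|b| + `|a - b|.
Proof. by have := ler_normD b (a - b); rewrite addrC subrK. Qed.

Arguments le_sqrt_prod {R x a b}.
Arguments bk_eq {R n k x xk}.
Arguments tri {R}.
Arguments lasso_alg {R l N1 N0 Z ip U2 u}.
Arguments sum_sq_diff {R p}.
Arguments arith_u {R b g l s u aT cT}.
Arguments arith_H {R b g l s u aT cT H sk}.
Arguments sqrt_add_le {R a b}.
Arguments le_of_sq {R a b}.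
Arguments nsp_div {R K1 K2 P u sk mu c}.
Arguments l1_l2 {R n k S v}.

Theorem corollary1 (R : realType) (m n k : nat) (A : 'M[R]_(m, n))
  (lam : R) (x : 'cV[R]_n) (z : 'cV[R]_m) (xs xk : 'cV[R]_n) :
  (2 <= k)%N ->
  (forall i : 'I_n, norm2 (col i A) = 1) ->
  coherence A < 1 / (2 * k%:R - 1) ->
  0 < lam ->
  norm2 z <= lam ->
  (forall y : 'cV[R]_n, lasso_obj A (A *m x + z) lam xs <= lasso_obj A (A *m x + z) lam y) ->
  best_kterm k x xk ->
  let mu := coherence A in
  let sk := Num.sqrt (k%:R : R) in
  let alpha1 := Num.sqrt (1 + (k%:R - 1) * mu) / (1 - (k%:R - 1) * mu) in
  let alpha2 := sk * mu / (1 - (k%:R - 1) * mu) in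
  let C1 := 2 / (sk * alpha1 + 1) in
  let C2 := 2 * (sk * alpha1 + 1) in
  let C3 := (2 * sk * alpha1 * fk k alpha2 + 2 * gk k alpha2)
            / (sk * (1 - sk * alpha2) * (sk * alpha1 + 1)) in
  let C4 := ((sk * alpha1 * (5 + 2 * sk * alpha2) + gk k alpha2) * (sk * alpha1 + 1))
            / (sk * (1 - sk * alpha2)) in
  norm2 (A *m (xs - x)) <= C1 * norm1 (x - xk) + C2 * lam /\
  norm2 (xs - x) <= C3 * norm1 (x - xk) + C4 * lam.
Proof.
move=> hk hcol hcoh hlam hz hopt hbk mu sk alpha1 alpha2 C1 C2 C3 C4.
have mu0 : 0 <= mu by exact: coh_ge0.
have hdiag : forall i, col_dot A i i = 1 by move=> i; exact: diag1 (hcol i).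
have hoff : forall i j : 'I_n, i != j -> `|col_dot A i j| <= mu by move=> i j; exact: coh_off.
have k1 : (1 <= k)%N by apply: leq_trans hk.
have K2 : 2 <= (k%:R : R) by rewrite ler_nat.
have hmuk : (2 * k%:R - 1) * mu < 1.
  have p : 0 < 2 * (k%:R : R) - 1 by lra.
  by move: hcoh; rewrite -/mu ltr_pdivlMr // mulrC.
have K1pos : 0 < 1 - (k%:R - 1) * mu.
  have : 0 <= k%:R * mu by apply: mulr_ge0 => //; lra.
  lra.
have sk0 : 0 < sk by rewrite sqrtr_gt0; lra.
have hsk2 : sk ^+ 2 = k%:R by rewrite sqr_sqrtr //; lra.
pose h := fun i : 'I_n => xs i 0 - x i 0.
pose T := [set i : 'I_n | xk i 0 != 0].
have hT : (#|T| <= k)%N by case: hbk.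
pose vT := fun i => if i \in T then h i else 0.
pose wT := fun i => if i \in T then 0 else h i.
have hvT : forall i, i \notin T -> vT i = 0 by move=> i /negbTE hi; rewrite /vT hi.
have hwT : forall i, i \in T -> wT i = 0 by move=> i hi; rewrite /wT hi.
have hvwT : forall i, vT i + wT i = h i.
  by move=> i; rewrite /vT /wT; case: (i \in T); rewrite ?addr0 ?add0r.
have nT := nsp _ _ _ A mu hdiag mu0 hoff k T h vT wT hT hvT hwT hvwT K1pos k1.
have hu : norm2 (A *m (xs - x)) = Num.sqrt (\sum_l Av A h l ^+ 2).
  rewrite /norm2; congr (Num.sqrt _); apply: eq_bigr => l _.
  by rewrite mxE /Av; congr (_ ^+ 2); apply: eq_bigr => j _; rewrite !mxE.
have hH : norm2 (xs - x) = Num.sqrt (\sum_i h i ^+ 2).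
  by rewrite /norm2; congr (Num.sqrt _); apply: eq_bigr => i _; rewrite !mxE.
have hsig : norm1 (x - xk) = \sum_i `|x i 0 - xk i 0|.
  by rewrite /norm1; apply: eq_bigr => i _; rewrite !mxE.
rewrite hu hH hsig.
have u0 : 0 <= Num.sqrt (\sum_l Av A h l ^+ 2) by exact: sqrtr_ge0.
have hPT : Num.sqrt (\sum_i vT i ^+ 2) <= alpha1 * Num.sqrt (\sum_l Av A h l ^+ 2)
            + alpha2 * \sum_i `|wT i| := nsp_div K1pos nT.
have haT := l1_l2 hT hvT.
have F2 : \sum_i `|vT i| <= (sk * alpha1) * Num.sqrt (\sum_l Av A h l ^+ 2)
            + (sk * alpha2) * \sum_i `|wT i|.
  apply: le_trans haT _.
  have -> : sk * alpha1 * Num.sqrt (\sum_l Av A h l ^+ 2) + sk * alpha2 * \sum_i `|wT i|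
    = sk * (alpha1 * Num.sqrt (\sum_l Av A h l ^+ 2) + alpha2 * \sum_i `|wT i|) by ring.
  apply: ler_wpM2l; [exact: ltW | exact: hPT].
have n2 : forall p (v : 'cV[R]_p), norm2 v ^+ 2 = \sum_i v i 0 ^+ 2.
  by move=> p v; rewrite sqr_sqrtr //; apply: sumr_ge0 => i _; exact: sqr_ge0.
have hl := hopt x; rewrite /lasso_obj in hl.
have eZ : A *m x + z - A *m x = z by rewrite addrAC subrr add0r.
rewrite eZ in hl.
have eR : \sum_l (A *m x + z - A *m xs) l 0 ^+ 2 = \sum_l (z l 0 - Av A h l) ^+ 2.
  apply: eq_bigr => l _; congr (_ ^+ 2); rewrite !mxE /Av.
  have -> : \sum_j A l j * h j = \sum_j A l j * xs j 0 - \sum_j A l j * x j 0.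
    by rewrite -sumrB; apply: eq_bigr => j _; rewrite /h mulrBr.
  ring.
rewrite !n2 eR (sum_sq_diff (fun l => z l 0) (Av A h)) in hl.
have hip : \sum_l z l 0 * Av A h l <= lam * Num.sqrt (\sum_l Av A h l ^+ 2).
  have z0 : 0 <= \sum_l z l 0 ^+ 2 by apply: sumr_ge0 => l _; exact: sqr_ge0.
  have a0 : 0 <= \sum_l Av A h l ^+ 2 by apply: sumr_ge0 => l _; exact: sqr_ge0.
  apply: le_trans (le_sqrt_prod z0 a0 (CS _ _ (fun l => z l 0) (Av A h))) _.
  by apply: ler_wpM2r => //.
have hu2 : Num.sqrt (\sum_l Av A h l ^+ 2) ^+ 2 = \sum_l Av A h l ^+ 2.
  by rewrite sqr_sqrtr //; apply: sumr_ge0 => l _; exact: sqr_ge0.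
have F1core := lasso_alg hlam hl hip hu2.
have F1a : \sum_i `|wT i| - \sum_i `|vT i| - 2 * \sum_i `|x i 0 - xk i 0|
           <= norm1 xs - norm1 x.
  rewrite /norm1 mulr_sumr -!sumrB; apply: ler_sum => i _.
  rewrite /vT /wT /h; case: (boolP (i \in T)) => hi.
    rewrite inE in hi; rewrite (bk_eq hbk i hi) subrr normr0 mulr0 subr0.
    have := tri (x i 0) (xs i 0); rewrite distrC; lra.
  have e : xk i 0 = 0 by move: hi; rewrite inE negbK => /eqP.
  rewrite e subr0 normr0 subr0.
  have := ler_normB (xs i 0) (x i 0); lra.
have F1 : 2 * lam * (\sum_i `|wT i| - \sum_i `|vT i| - 2 * \sum_i `|x i 0 - xk i 0|)
          + Num.sqrt (\sum_l Av A h l ^+ 2) ^+ 2 <= 2 * lam * Num.sqrt (\sum_l Av A h l ^+ 2).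
  apply: le_trans F1core; rewrite lerD2r; apply: ler_wpM2l => //; lra.
have [S [hS hSmax]] := sort_set _ n k h.
pose vS := fun i => if i \in S then h i else 0.
pose wS := fun i => if i \in S then 0 else h i.
have hvS : forall i, i \notin S -> vS i = 0 by move=> i /negbTE hi; rewrite /vS hi.
have hwS : forall i, i \in S -> wS i = 0 by move=> i hi; rewrite /wS hi.
have hvwS : forall i, vS i + wS i = h i.
  by move=> i; rewrite /vS /wS; case: (i \in S); rewrite ?addr0 ?add0r.
have nS := nsp _ _ _ A mu hdiag mu0 hoff k S h vS wS hS hvS hwS hvwS K1pos k1.
have hPS : Num.sqrt (\sum_i vS i ^+ 2) <= alpha1 * Num.sqrt (\sum_l Av A h l ^+ 2)
            + alpha2 * \sum_i `|wS i| := nsp_div K1pos nS.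
have eNT : \sum_i `|h i| = \sum_i `|vT i| + \sum_i `|wT i|.
  rewrite -big_split; apply: eq_bigr => i _ /=; rewrite /vT /wT.
  by case: (i \in T); rewrite normr0 ?addr0 ?add0r.
have eNS : \sum_i `|h i| = \sum_i `|vS i| + \sum_i `|wS i|.
  rewrite -big_split; apply: eq_bigr => i _ /=; rewrite /vS /wS.
  by case: (i \in S); rewrite normr0 ?addr0 ?add0r.
have eV : \sum_i `|vS i| = \sum_(i in S) `|h i|.
  rewrite [RHS]big_mkcond; apply: eq_bigr => i _; rewrite /vS.
  by case: (i \in S); rewrite ?normr0.
have hwb : forall j, k%:R * `|wS j| <= \sum_i `|vS i|.
  move=> j; rewrite eV /wS; case: (boolP (j \in S)) => hj.
    by rewrite normr0 mulr0; apply: sumr_ge0 => i _; exact: normr_ge0.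
  exact: hSmax.
have hwS2 : k%:R * \sum_i wS i ^+ 2 <= (\sum_i `|vS i|) * (\sum_i `|wS i|).
  rewrite mulr_sumr (mulrC (\sum_i `|vS i|)) big_distrl /=; apply: ler_sum => j _.
  rewrite -(real_normK (num_real (wS j))).
  have -> : k%:R * `|wS j| ^+ 2 = `|wS j| * (k%:R * `|wS j|) by ring.
  by apply: ler_wpM2l => //; exact: hwb.
have V0 : 0 <= \sum_i `|vS i| by apply: sumr_ge0 => i _; exact: normr_ge0.
have W0 : 0 <= \sum_i `|wS i| by apply: sumr_ge0 => i _; exact: normr_ge0.
have N0 : 0 <= \sum_i `|h i| by apply: sumr_ge0 => i _; exact: normr_ge0.
have wS0 : 0 <= \sum_i wS i ^+ 2 by apply: sumr_ge0 => i _; exact: sqr_ge0.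
have vS0 : 0 <= \sum_i vS i ^+ 2 by apply: sumr_ge0 => i _; exact: sqr_ge0.
have hQS : 2 * sk * Num.sqrt (\sum_i wS i ^+ 2) <= \sum_i `|h i|.
  apply: le_of_sq => //.
  have -> : (2 * sk * Num.sqrt (\sum_i wS i ^+ 2)) ^+ 2 = 4 * (k%:R * \sum_i wS i ^+ 2).
    by rewrite !exprMn hsk2 sqr_sqrtr //; ring.
  rewrite eNS.
  have := sqr_ge0 (\sum_i `|vS i| - \sum_i `|wS i|).
  nra.
have hHS : Num.sqrt (\sum_i h i ^+ 2) <= Num.sqrt (\sum_i vS i ^+ 2) + Num.sqrt (\sum_i wS i ^+ 2).
  have -> : \sum_i h i ^+ 2 = \sum_i vS i ^+ 2 + \sum_i wS i ^+ 2.
    rewrite -big_split; apply: eq_bigr => i _ /=; rewrite /vS /wS.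
    by case: (i \in S); rewrite expr0n /= ?addr0 ?add0r.
  exact: sqrt_add_le.
have al0 : 0 <= alpha1 by apply: divr_ge0; [exact: sqrtr_ge0 | exact: ltW].
have b0 : 0 <= sk * alpha1 by apply: mulr_ge0 => //; exact: ltW.
have g0 : 0 <= sk * alpha2.
  by apply: mulr_ge0; [exact: ltW | apply: divr_ge0; [apply: mulr_ge0 => //; exact: ltW | exact: ltW]].
have g1 : sk * alpha2 < 1.
  have -> : sk * alpha2 = (sk ^+ 2 * mu) / (1 - (k%:R - 1) * mu) by rewrite /alpha2; ring.
  rewrite hsk2 ltr_pdivrMr // mul1r; lra.
have F3 : 2 * sk * Num.sqrt (\sum_i h i ^+ 2) <=
    2 * (sk * alpha1) * Num.sqrt (\sum_l Av A h l ^+ 2)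
    + (2 * (sk * alpha2) + 1) * (\sum_i `|vT i| + \sum_i `|wT i|).
  have h1 : sk * Num.sqrt (\sum_i vS i ^+ 2) <=
     sk * (alpha1 * Num.sqrt (\sum_l Av A h l ^+ 2) + alpha2 * \sum_i `|wS i|).
    by apply: ler_wpM2l => //; exact: ltW.
  have h2 : (sk * alpha2) * \sum_i `|wS i| <= (sk * alpha2) * \sum_i `|h i|.
    by apply: ler_wpM2l => //; lra.
  have h3 : sk * Num.sqrt (\sum_i h i ^+ 2) <=
      sk * (Num.sqrt (\sum_i vS i ^+ 2) + Num.sqrt (\sum_i wS i ^+ 2)).
    by apply: ler_wpM2l => //; exact: ltW.
  rewrite -eNT.
  move: h1 h2 h3 hQS; rewrite !mulrDr !mulrA; lra.
have s0 : 0 <= \sum_i `|x i 0 - xk i 0| by apply: sumr_ge0 => i _; exact: normr_ge0.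
have a0 : 0 <= \sum_i `|vT i| by apply: sumr_ge0 => i _; exact: normr_ge0.
have c0 : 0 <= \sum_i `|wT i| by apply: sumr_ge0 => i _; exact: normr_ge0.
have H0 : 0 <= Num.sqrt (\sum_i h i ^+ 2) by exact: sqrtr_ge0.
have B0 : 0 < sk * alpha1 + 1 by lra.
split.
  have G1 := arith_u b0 g0 g1 hlam s0 u0 a0 c0 F1 F2.
  rewrite -(ler_pM2l B0).
  have -> : (sk * alpha1 + 1) * (C1 * \sum_i `|x i 0 - xk i 0| + C2 * lam)
     = 2 * \sum_i `|x i 0 - xk i 0| + 2 * (sk * alpha1 + 1) ^+ 2 * lam.
    by rewrite /C1 /C2; field; rewrite gt_eqF.
  exact: G1.
have G2 := arith_H b0 g0 g1 hlam s0 u0 a0 c0 H0 sk0 F1 F2 F3.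
have D0 : 0 < 1 - sk * alpha2 by lra.
have P0 : 0 < 2 * sk * (1 - sk * alpha2) * (sk * alpha1 + 1).
  by apply: mulr_gt0 => //; apply: mulr_gt0 => //; apply: mulr_gt0.
rewrite -(ler_pM2l P0).
have efk : fk k alpha2 = (sk * alpha2) ^+ 2 + 3 * (sk * alpha2) + 3.
  by rewrite /fk -/sk -hsk2; ring.
have egk : gk k alpha2 = 2 * (sk * alpha2) ^+ 2 + 4 * (sk * alpha2) + 1.
  by rewrite /gk -/sk -hsk2; ring.
have -> : 2 * sk * (1 - sk * alpha2) * (sk * alpha1 + 1) *
   (C3 * \sum_i `|x i 0 - xk i 0| + C4 * lam) =
   2 * (2 * (sk * alpha1) * ((sk * alpha2) ^+ 2 + 3 * (sk * alpha2) + 3)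
        + 2 * (2 * (sk * alpha2) ^+ 2 + 4 * (sk * alpha2) + 1)) * \sum_i `|x i 0 - xk i 0|
   + 2 * (sk * alpha1 + 1) ^+ 2 * (sk * alpha1 * (5 + 2 * (sk * alpha2))
        + (2 * (sk * alpha2) ^+ 2 + 4 * (sk * alpha2) + 1)) * lam.
  rewrite /C3 /C4 efk egk; field.
  by rewrite !gt_eqF.
have -> : 2 * sk * (1 - sk * alpha2) * (sk * alpha1 + 1) * Num.sqrt (\sum_i h i ^+ 2)
  = (1 - sk * alpha2) * (sk * alpha1 + 1) * (2 * sk * Num.sqrt (\sum_i h i ^+ 2)) by ring.
exact: G2.
Qed.
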